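(* Let $L$ be an $R_0$-algebra and $k\in[0,1)$. Every $(\in,\in\vee q_k)$-fuzzy fated filter $\mu$ of $L$ satisfies, for all $x,y,z\in L$: (1) $\mu(x\to z)\ge\min\{\mu(x\to(y\to z)),\mu(x\to y),\tfrac{1-k}{2}\}$; (2) $\mu(x)\ge\min\{\mu((x\to y)\to x),\tfrac{1-k}{2}\}$.
   Context: An $R_0$-algebra is a bounded distributive lattice $(L,\wedge,\vee,0,1)$ with an order-reversing involution $\neg$ and a binary operation $\to$ such that for all $x,y,z\in L$: $x\to y=\neg y\to\neg x$; $1\to x=x$; $(y\to z)\wedge((x\to y)\to(x\to z))=y\to z$; $x\to(y\to z)=y\to(x\to z)$; $x\to(y\vee z)=(x\to y)\vee(x\to z)$; $(x\to y)\vee((x\to y)\to(\neg x\vee y))=1$. For $x\in L$, $t\in(0,1]$ and a fuzzy subset $\mu:L\to[0,1]$: $x_t\in\mu$ iff $\mu(x)\ge t$; $x_t\,q_k\,\mu$ iff $\mu(x)+t+k>1$; $x_t\in\vee q_k\,\mu$ iff $x_t\in\mu$ or $x_t\,q_k\,\mu$. $\mu$ is an $(\in,\in\vee q_k)$-fuzzy fated filter of $L$ if (i) for all $x\in L$, $t\in(0,1]$: $x_t\in\mu\Rightarrow 1_t\in\vee q_k\,\mu$; and (ii) for all $x,a,y\in L$, $t,s\in(0,1]$: if $(a\to((x\to y)\to x))_t\in\mu$ and $a_s\in\mu$ then $x_{\min\{t,s\}}\in\vee q_k\,\mu$. *)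

(* Defs.v *)
From Stdlib Require Import Reals.
Open Scope R_scope.

Record R0_algebra := {
  carrier :> Type;
  meet : carrier -> carrier -> carrier;
  join : carrier -> carrier -> carrier;
  bot : carrier;
  top : carrier;
  neg : carrier -> carrier;
  imp : carrier -> carrier -> carrier;
  meetC : forall x y, meet x y = meet y x;
  joinC : forall x y, join x y = join y x;
  meetA : forall x y z, meet x (meet y z) = meet (meet x y) z;
  joinA : forall x y z, join x (join y z) = join (join x y) z;
  meet_absorb : forall x y, meet x (join x y) = x;
  join_absorb : forall x y, join x (meet x y) = x;
  meet_joinDl : forall x y z, meet x (join y z) = join (meet x y) (meet x z);
  join_bot : forall x, join x bot = x;
  meet_top : forall x, meet x top = x;
  (* order-reversing involution (x <= y iff meet x y = x) *)
  negK : forall x, neg (neg x) = x;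
  neg_antitone : forall x y, meet x y = x -> meet (neg y) (neg x) = neg y;
  R0_1 : forall x y, imp x y = imp (neg y) (neg x);
  R0_2 : forall x, imp top x = x;
  R0_3 : forall x y z, meet (imp y z) (imp (imp x y) (imp x z)) = imp y z;
  R0_4 : forall x y z, imp x (imp y z) = imp y (imp x z);
  R0_5 : forall x y z, imp x (join y z) = join (imp x y) (imp x z);
  R0_6 : forall x y, join (imp x y) (imp (imp x y) (join (neg x) y)) = top
}.

Arguments top {r}.
Arguments imp {r}.

Definition fin {L : R0_algebra} (mu : L -> R) (x : L) (t : R) : Prop := mu x >= t.
Definition fq (k : R) {L : R0_algebra} (mu : L -> R) (x : L) (t : R) : Prop :=
  mu x + t + k > 1.
Definition fin_or_q (k : R) {L : R0_algebra} (mu : L -> R) (x : L) (t : R) : Prop :=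
  fin mu x t \/ fq k mu x t.

Definition fuzzy_subset {L : R0_algebra} (mu : L -> R) : Prop :=
  forall x, 0 <= mu x <= 1.

Definition in_inqk_fuzzy_fated_filter (k : R) (L : R0_algebra) (mu : L -> R) : Prop :=
  fuzzy_subset mu /\
  (forall (x : L) (t : R), 0 < t <= 1 -> fin mu x t -> fin_or_q k mu top t) /\
  (forall (x a y : L) (t s : R), 0 < t <= 1 -> 0 < s <= 1 ->
     fin mu (imp a (imp (imp x y) x)) t -> fin mu a s ->
     fin_or_q k mu x (Rmin t s)).

(* Main.v *)
Require Import Defs.
From Stdlib Require Import Reals Lra.
Open Scope R_scope.

Section Alg.
Variable L : R0_algebra.

Lemma join_of_le (a b : L) : meet L a b = a -> join L a b = b.
Proof.
  intro H. transitivity (join L (meet L a b) b).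
  - rewrite H; reflexivity.
  - rewrite joinC, meetC; apply join_absorb.
Qed.

Lemma le_of_join (a b : L) : join L a b = b -> meet L a b = a.
Proof. intro H. rewrite <- H. apply meet_absorb. Qed.

Lemma mono2 (x y z : L) : meet L y z = y -> meet L (imp x y) (imp x z) = imp x y.
Proof.
  intro H. apply le_of_join. rewrite <- R0_5. rewrite join_of_le; auto.
Qed.

Lemma bot_le (y : L) : meet L (Defs.bot L) y = Defs.bot L.
Proof.
  pose proof (meet_absorb L (Defs.bot L) y) as H.
  rewrite (joinC L (Defs.bot L) y), join_bot in H. exact H.
Qed.

Lemma neg_bot : Defs.neg L (Defs.bot L) = top.
Proof.
  pose proof (neg_antitone L (Defs.bot L) (Defs.neg L top) (bot_le _)) as H.
  rewrite negK in H. rewrite meetC, meet_top in H. exact H.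
Qed.

Lemma neg_top : Defs.neg L top = Defs.bot L.
Proof. rewrite <- neg_bot, negK. reflexivity. Qed.

Lemma imp_bot (y : L) : imp y (Defs.bot L) = Defs.neg L y.
Proof. rewrite R0_1, neg_bot, R0_2. reflexivity. Qed.

Lemma le_refl_imp (y : L) : meet L y (imp y y) = y.
Proof.
  rewrite (R0_1 L y y).
  pose proof (mono2 (Defs.neg L y) (Defs.bot L) (Defs.neg L y) (bot_le _)) as H.
  rewrite imp_bot, negK in H. exact H.
Qed.

Lemma imp_refl (y : L) : imp y y = top.
Proof.
  pose proof (R0_6 L top y) as H.
  rewrite R0_2, neg_top, (joinC L (Defs.bot L) y), join_bot in H.
  rewrite join_of_le in H; auto. apply le_refl_imp.
Qed.

Lemma le_imp_top (a b : L) : meet L a b = a -> imp a b = top.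
Proof.
  intro H. pose proof (mono2 a a b H) as H2.
  rewrite imp_refl, meetC, meet_top in H2. exact H2.
Qed.

Lemma top_of_ge (p : L) : meet L top p = top -> p = top.
Proof. intro H. rewrite meetC, meet_top in H. exact H. Qed.
End Alg.

Section Fz.
Variables (L : R0_algebra) (k : R) (mu : L -> R).
Hypothesis Hk : 0 <= k < 1.
Hypothesis HF : in_inqk_fuzzy_fated_filter k L mu.

Lemma Ltop (t : R) (w : L) : 0 < t <= (1 - k) / 2 -> mu w >= t -> mu top >= t.
Proof.
  intros Ht Hw. destruct HF as [_ [H1 _]].
  destruct (H1 w t ltac:(lra) Hw) as [A|A]; unfold fin, fq in *; lra.
Qed.

Lemma LMP (t : R) (a b : L) : 0 < t <= (1 - k) / 2 ->
  mu (imp a b) >= t -> mu a >= t -> mu b >= t.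
Proof.
  intros Ht Hab Ha. destruct HF as [_ [_ H2]].
  assert (P : fin mu (imp a (imp (imp b b) b)) t).
  { unfold fin. rewrite imp_refl, R0_2. exact Hab. }
  destruct (H2 b a b t t ltac:(lra) ltac:(lra) P Ha) as [A|A];
  unfold fin, fq in *; rewrite Rmin_left in A; lra.
Qed.

Lemma LBool (t : R) (X Y : L) : 0 < t <= (1 - k) / 2 ->
  mu (imp (imp X Y) X) >= t -> mu X >= t.
Proof.
  intros Ht H. destruct HF as [_ [_ H2]].
  assert (P : fin mu (imp top (imp (imp X Y) X)) t).
  { unfold fin. rewrite R0_2. exact H. }
  pose proof (Ltop t _ Ht H) as Htop.
  destruct (H2 X top Y t t ltac:(lra) ltac:(lra) P Htop) as [A|A];
  unfold fin, fq in *; rewrite Rmin_left in A; lra.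
Qed.

Lemma LMono (t : R) (p q : L) : 0 < t <= (1 - k) / 2 ->
  meet L p q = p -> mu p >= t -> mu q >= t.
Proof.
  intros Ht Hle Hp. apply (LMP t p q Ht); auto.
  rewrite le_imp_top; auto. exact (Ltop t p Ht Hp).
Qed.
End Fz.

Theorem proposition3p16 (L : R0_algebra) (k : R) (mu : L -> R) :
  0 <= k < 1 ->
  in_inqk_fuzzy_fated_filter k L mu ->
  forall x y z : L,
    mu (imp x z) >= Rmin (Rmin (mu (imp x (imp y z))) (mu (imp x y))) ((1 - k) / 2) /\
    mu x >= Rmin (mu (imp (imp x y) x)) ((1 - k) / 2).
Proof.
  intros Hk HF x y z.
  pose proof (proj1 HF) as Hfs.
  split.
  - set (t := Rmin (Rmin (mu (imp x (imp y z))) (mu (imp x y))) ((1 - k) / 2)).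
    destruct (Rle_or_lt t 0) as [Ht0|Ht0].
    { pose proof (Hfs (imp x z)); lra. }
    assert (Ht : 0 < t <= (1 - k) / 2) by (split; [lra | apply Rmin_r]).
    assert (H1 : mu (imp x (imp y z)) >= t).
    { unfold t. pose proof (Rmin_l (Rmin (mu (imp x (imp y z))) (mu (imp x y))) ((1 - k) / 2)).
      pose proof (Rmin_l (mu (imp x (imp y z))) (mu (imp x y))). lra. }
    assert (H2 : mu (imp x y) >= t).
    { unfold t. pose proof (Rmin_l (Rmin (mu (imp x (imp y z))) (mu (imp x y))) ((1 - k) / 2)).
      pose proof (Rmin_r (mu (imp x (imp y z))) (mu (imp x y))). lra. }
    assert (le1 : meet L (imp x (imp y z)) (imp (imp x y) (imp x (imp x z))) = imp x (imp y z)).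
    { rewrite (R0_4 L (imp x y) x (imp x z)). apply mono2. apply R0_3. }
    pose proof (LMono L k mu Hk HF t _ _ Ht le1 H1) as A1.
    pose proof (LMP L k mu Hk HF t _ _ Ht A1 H2) as A2.
    assert (E : imp (imp x (imp x z)) (imp x (imp (imp (imp x z) z) z)) = top).
    { apply top_of_ge. pose proof (R0_3 L x (imp x z) (imp (imp (imp x z) z) z)) as R.
      rewrite (R0_4 L (imp x z) (imp (imp x z) z) z), imp_refl in R. exact R. }
    assert (A3 : mu (imp x (imp (imp (imp x z) z) z)) >= t).
    { apply (LMP L k mu Hk HF t (imp x (imp x z))); auto.
      rewrite E. exact (Ltop L k mu Hk HF t _ Ht A2). }
    rewrite (R0_4 L x (imp (imp x z) z) z) in A3.
    exact (LBool L k mu Hk HF t (imp x z) z Ht A3).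
  - set (t := Rmin (mu (imp (imp x y) x)) ((1 - k) / 2)).
    destruct (Rle_or_lt t 0) as [Ht0|Ht0].
    { pose proof (Hfs x); lra. }
    assert (Ht : 0 < t <= (1 - k) / 2) by (split; [lra | apply Rmin_r]).
    apply (LBool L k mu Hk HF t x y Ht).
    pose proof (Rmin_l (mu (imp (imp x y) x)) ((1 - k) / 2)). unfold t; lra.
Qed.
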